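(* Let $G=K_{s}^{t}$ with $3\leq t+1\leq s$ and $n=s+t$. Then $\lambda_{2}(D(G))=\sqrt{2}-2$.
   Context: $D(G)$ is the distance matrix of $G$, with eigenvalues $\lambda_{1}(D(G))\geq\lambda_{2}(D(G))\geq\cdots$. $K_{s}^{t}$ denotes the graph on $n=s+t$ vertices obtained from the complete graph $K_s$ by attaching a pendant edge (a new vertex of degree 1) to each of $t$ distinct vertices of $K_s$. *)

(* Defs.v *)
From mathcomp Require Import all_boot all_order all_algebra.
Set Implicit Arguments. Unset Strict Implicit. Unset Printing Implicit Defensive.
Import Order.TTheory GRing.Theory Num.Theory.

(* Simple graphs are symmetric irreflexive relations on a finType. *)

Fixpoint reach (T : finType) (e : rel T) (k : nat) (u v : T) : bool :=
  match k with
  | 0 => u == v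
  | k'.+1 => reach e k' u v || [exists w, reach e k' u w && e w v]
  end.

(* graph distance: least k with a walk of length k from u to v
   (correct for connected graphs; every distance is < #|T|) *)
Definition gdist (T : finType) (e : rel T) (u v : T) : nat :=
  find (fun k => reach e k u v) (iota 0 #|T|).

(* K_s^t on vertices 'I_(s+t): vertices 0..s-1 form K_s, and the vertex
   s+j (j < t) is a pendant vertex attached to vertex j. *)
Definition Kst_adj (s t : nat) : rel 'I_(s + t) :=
  fun i j =>
    (i != j) &&
    [|| (i < s) && (j < s),
        (i < s) && (s <= j) && (j == i + s :> nat)
      | (j < s) && (s <= i) && (i == j + s :> nat)].

Arguments Kst_adj : clear implicits.

Local Open Scope ring_scope.

Definition dist_mx_ord (R : nzRingType) (n : nat) (e : rel 'I_n) : 'M[R]_n :=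
  \matrix_(i, j) (gdist e i j)%:R.

(* r is the list of eigenvalues of A (with multiplicity) in nonincreasing
   order: lambda_1 = r`_0 >= lambda_2 = r`_1 >= ... *)
Definition eigen_seq (R : numDomainType) (n : nat) (A : 'M[R]_n) (r : seq R) :=
  sorted >=%R r /\ char_poly A = \prod_(x <- r) ('X - x%:P).

(* Main.v *)
Require Import Defs.
From mathcomp Require Import all_boot all_order all_algebra.
From mathcomp Require Import zify ring lra.
Import Order.TTheory GRing.Theory Num.Theory.

Definition dd (s : nat) (u v : nat) : nat :=
  if u == v then 0 else if (u < s) && (v < s) then 1
  else if u < s then (if v == u + s then 1 else 2)
  else if v < s then (if u == v + s then 1 else 2) else 3.

Lemma adjE s t (u v : 'I_(s+t)) : Kst_adj s t u v = (dd s u v == 1).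
Proof.
rewrite /Kst_adj /dd -(inj_eq val_inj) /=.
repeat (case: ifP => /=); move=> *; lia.
Qed.

Lemma dd_tri s t u v w : t <= s -> u < s + t -> v < s + t -> w < s + t ->
  dd s w v = 1 -> dd s u v <= dd s u w + 1.
Proof. rewrite /dd; repeat (case: ifP => /=); move=> *; lia. Qed.

Definition wnb s u v := if dd s u v == 1 then u else if v < s then u - s else v - s.

Lemma dd_geo s t u v : t <= s -> u < s + t -> v < s + t -> 1 <= dd s u v ->
  [/\ wnb s u v < s + t, dd s u (wnb s u v) = (dd s u v).-1 & dd s (wnb s u v) v = 1].
Proof. rewrite /wnb /dd; repeat (case: ifP => /=); move=> *; split; lia. Qed.

Lemma reachE s t k (u v : 'I_(s+t)) : t <= s ->
  reach (Kst_adj s t) k u v = (dd s u v <= k).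
Proof.
move=> ts; elim: k v => [|k IH] v /=.
  by rewrite /dd -(inj_eq val_inj) /=; repeat (case: ifP => /=); move=> *; lia.
rewrite IH; apply/idP/idP.
  case/orP=> [h|/existsP[w /andP[h1 h2]]]; first by lia.
  rewrite IH in h1; rewrite adjE in h2.
  have := @dd_tri s t u v w ts (ltn_ord u) (ltn_ord v) (ltn_ord w) (eqP h2); lia.
move=> h; case: (leqP (dd s u v) k) => [le|lt]; first by [].
apply/orP; right.
have [w1 w2 w3] := @dd_geo s t u v ts (ltn_ord u) (ltn_ord v) (leq_trans (ltn0Sn k) lt).
apply/existsP; exists (Ordinal w1); rewrite IH adjE /= w2 w3; apply/andP; split=> //; lia.
Qed.

Lemma find_le d n : d < n -> find (fun k => d <= k) (iota 0 n) = d.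
Proof.
move=> dn; rewrite -(subnKC (ltnW dn)) iotaD find_cat /=.
have -> : has (fun k => d <= k) (iota 0 d) = false.
  apply/hasP => -[k]; rewrite mem_iota => /andP[_ kd] dk; lia.
rewrite size_iota; have : 0 < n - d by lia.
case: (n - d) => [|m] //= _.

by rewrite leqnn addn0.
Qed.

Lemma gdistE s t (u v : 'I_(s+t)) : 2 <= t <= s ->
  gdist (Kst_adj s t) u v = dd s u v.
Proof.
move=> /andP[t2 ts]; rewrite /gdist card_ord.
rewrite (eq_find (a2 := fun k => dd s u v <= k)); last by move=> k; rewrite reachE.
apply: find_le; rewrite /dd; repeat (case: ifP => /=); move=> *; lia.
Qed.

Local Open Scope ring_scope.

Notation J m n := (@const_mx _ m n 1).

Lemma distBlock (R : comNzRingType) s t : (2 <= t <= s)%N ->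
  dist_mx_ord R (Kst_adj s t) =
  block_mx (J s s - 1%:M) (2%:R *: J s t - pid_mx t) (2%:R *: J t s - pid_mx t)
           (3%:R *: J t t - 3%:R%:M).
Proof.
move=> hts; apply/matrixP => u v; rewrite mxE gdistE //.
rewrite -[u]splitK -[v]splitK.
case: (split u) => i; case: (split v) => j /=.
- rewrite block_mxEul !mxE /dd /=.
  have [->|ne] := eqVneq i j; first by rewrite !eqxx subrr.
  have ne' : (val i == val j) = false by rewrite (inj_eq val_inj); exact: negPf ne.
  by rewrite ne' ?(negPf ne) (ltn_ord i) (ltn_ord j) subr0.
- rewrite block_mxEur !mxE /dd /=.
  case: (nat_of_ord i =P nat_of_ord j) => h; case: (ltnP i t) => h'; rewrite /=;
  have := ltn_ord i; have := ltn_ord j;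
  repeat (case: ifP => /=); move=> *; try lia; ring.
- rewrite block_mxEdl !mxE /dd /=.
  case: (nat_of_ord i =P nat_of_ord j) => h; case: (ltnP i t) => h'; rewrite /=;
  have := ltn_ord i; have := ltn_ord j;
  repeat (case: ifP => /=); move=> *; try lia; ring.
- rewrite block_mxEdr !mxE /dd /=.
  have [->|ne] := eqVneq i j; first by rewrite !eqxx /=; ring.
  have ne' : (val i == val j) = false by rewrite (inj_eq val_inj); exact: negPf ne.
  rewrite (eqn_add2l s) ne' /= !ltnNge !leq_addr /=; ring.
Qed.


Section MX.
Variable F : fieldType.

Lemma mulJJ m n p : J m n *m J n p = n%:R *: J m p :> 'M[F]_(m,p).
Proof.
apply/matrixP => i j; rewrite !mxE (eq_bigr (fun _ => 1)) ?sumr_const ?card_ord.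
  by rewrite mulr1.
by move=> k _; rewrite !mxE mulr1.
Qed.

Lemma pidJ s t k : (t <= s)%N -> (pid_mx t : 'M[F]_(t,s)) *m J s k = J t k.
Proof.
move=> ts; apply/matrixP => i j; rewrite !mxE.
have lt : (i < s)%N by apply: leq_trans (ltn_ord i) ts.
rewrite (bigD1 (Ordinal lt)) //= big1 ?addr0.
  by rewrite !mxE eqxx ltn_ord mulr1.
move=> l ne; rewrite !mxE.
have -> : (i == l :> nat) = false.
  by apply/negbTE; apply: contra ne => /eqP h; apply/eqP/val_inj.
by rewrite mul0r.
Qed.

Lemma Jpid s t k : (t <= s)%N -> J k s *m (pid_mx t : 'M[F]_(s,t)) = J k t.
Proof.
move=> ts; apply: trmx_inj; rewrite trmx_mul tr_pid_mx.
have -> : (J k s)^T = J s k :> 'M[F]_(s,k) by apply/matrixP => i j; rewrite !mxE.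
rewrite pidJ //; by apply/matrixP => i j; rewrite !mxE.
Qed.

Lemma pidpid s t : (t <= s)%N ->
  (pid_mx t : 'M[F]_(t,s)) *m (pid_mx t : 'M[F]_(s,t)) = 1%:M.
Proof.
move=> ts; rewrite mul_pid_mx minnn (minn_idPr ts) pid_mx_1 //.
Qed.

Lemma sylvester m k (U : 'M[F]_(m,k)) (V : 'M[F]_(k,m)) :
  \det (1%:M - U *m V) = \det (1%:M - V *m U).
Proof.
have e1 : block_mx 1%:M U V 1%:M =
   block_mx 1%:M 0 V 1%:M *m block_mx 1%:M U 0 (1%:M - V *m U).
  rewrite mulmx_block ?mul1mx ?mul0mx ?mulmx1 ?mulmx0 ?addr0 ?add0r.
  by rewrite [_ + (_ - _)]addrC subrK.
have e2 : block_mx 1%:M U V 1%:M =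
   block_mx (1%:M - U *m V) U 0 1%:M *m block_mx 1%:M 0 V 1%:M.
  rewrite mulmx_block ?mul1mx ?mul0mx ?mulmx1 ?mulmx0 ?addr0 ?add0r.
  by rewrite subrK.
have := congr1 determinant e1; rewrite e2 !det_mulmx ?det_ublock ?det_lblock.
by rewrite !det1 ?mul1r ?mulr1 => ->.
Qed.

Lemma detIJ m (u v : F) : u != 0 ->
  \det (u%:M + v *: J m m) = u ^+ m * (1 + m%:R * v / u).
Proof.
move=> u0.
have -> : u%:M + v *: J m m = u *: (1%:M - ((- (v / u)) *: J m 1%N) *m J 1%N m).
  rewrite -scalemxAl mulJJ scale1r scalerBr scalemx1 scalerA mulrN scaleNr opprK.
  by rewrite mulrC divfK.
rewrite detZ sylvester det_mx11 -scalemxAr mulJJ !mxE /=.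
by congr (_ * _); rewrite mulr1n mulr1 mulNr opprK [_ * m%:R]mulrC mulrA.
Qed.

Lemma schur m n (A : 'M[F]_m) Ai (B : 'M[F]_(m,n)) C (D : 'M[F]_n) :
  A *m Ai = 1%:M ->
  \det (block_mx A B C D) = \det A * \det (D - C *m Ai *m B).
Proof.
move=> AAi.
have -> : block_mx A B C D =
   block_mx A 0 C 1%:M *m block_mx 1%:M (Ai *m B) 0 (D - C *m Ai *m B).
  rewrite mulmx_block ?mulmx1 ?mul0mx ?mulmx0 ?addr0 ?add0r ?mul1mx mulmxA AAi mul1mx.
  by rewrite -mulmxA mulmxA addrC subrK.
by rewrite det_mulmx det_lblock det_ublock !det1 mulr1 mul1r.
Qed.

Lemma mulIJ m (u1 v1 u2 v2 : F) :
  (u1%:M + v1 *: J m m) *m (u2%:M + v2 *: J m m) =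
  (u1 * u2)%:M + (u1 * v2 + v1 * u2 + v1 * v2 * m%:R) *: J m m.
Proof.
rewrite mulmxDl !mulmxDr !mul_scalar_mx mul_mx_scalar -scalemxAl -scalemxAr mulJJ.
rewrite scalar_mxM -scalemx1 scalerA !scalerA !scalerDl scalemx1 !addrA.
by rewrite mul_scalar_mx (mulrC v1 u2).
Qed.
End MX.

Section E.
Variable F : fieldType.

Lemma mulPJ_IJ t s (P : 'M[F]_(t,s)) (w u v : F) : P *m J s s = J t s ->
  (P + w *: J t s) *m (u%:M + v *: J s s) = u *: P + (v + w*u + w*v*s%:R) *: J t s.
Proof.
move=> PJ; rewrite mulmxDl !mulmxDr mul_mx_scalar -!scalemxAr PJ -!scalemxAl mulJJ.
rewrite mul_mx_scalar !scalerA !scalerDl !addrA.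
by rewrite (mulrC v w).
Qed.

Lemma mulPJ_PJ t s (P : 'M[F]_(t,s)) (P' : 'M[F]_(s,t)) (u w z : F) :
  P *m P' = 1%:M -> P *m J s t = J t t -> J t s *m P' = J t t ->
  (u *: P + w *: J t s) *m (P' + z *: J s t) = u%:M + (u*z + w + w*z*s%:R) *: J t t.
Proof.
move=> PP PJ JP; rewrite mulmxDl !mulmxDr -!scalemxAl -!scalemxAr PP PJ JP mulJJ.
rewrite !scalerA !scalerDl scalemx1 !addrA.
by [].
Qed.
End E.

Definition detval (F : fieldType) (s t : nat) (x : F) : F :=
  let a := x + 1 in
  let k := a^-1 * (a - s%:R)^-1 in
  let wp := k - 2 * a^-1 - 2 * k * s%:R in
  let om := - 2 * a^-1 + wp * (1 - 2 * s%:R) in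
  let al := x + 3 - a^-1 in
  (a ^+ s * (1 + s%:R * (-1) / a)) * (al ^+ t * (1 + t%:R * (-3 - om) / al)).

Arguments detval {F}.

Lemma det_main (F : fieldType) s t (x : F) : (2 <= t <= s)%N ->
  x + 1 != 0 -> x + 1 != s%:R -> x + 3 - (x + 1)^-1 != 0 ->
  \det (x%:M - dist_mx_ord F (Kst_adj s t)) = detval s t x.
Proof.
move=> hts a0 as0 al0; have ts : (t <= s)%N by case/andP: hts.
rewrite /detval distBlock // (scalar_mx_block s t) opp_block_mx add_block_mx.
set a := x + 1; set k := a^-1 * (a - s%:R)^-1.
have e1 : x%:M + - (J s s - 1%:M) = a%:M + (-1) *: J s s :> 'M[F]_s.
  by apply/matrixP => i j; rewrite !mxE /a; case: (i == j) => /=; ring.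
have e2 : 0 + - (2%:R *: J s t - pid_mx t) = pid_mx t + (-2) *: J s t :> 'M[F]_(s,t).
  by apply/matrixP => i j; rewrite !mxE; ring.
have e3 : 0 + - (2%:R *: J t s - pid_mx t) = pid_mx t + (-2) *: J t s :> 'M[F]_(t,s).
  by apply/matrixP => i j; rewrite !mxE; ring.
have e4 : x%:M + - (3%:R *: J t t - 3%:R%:M) = (x + 3)%:M + (-3) *: J t t :> 'M[F]_t.
  by apply/matrixP => i j; rewrite !mxE; case: (i == j) => /=; ring.
rewrite e1 e2 e3 e4.
have AAi : (a%:M + (-1) *: J s s) *m (a^-1%:M + k *: J s s) = 1%:M.
  rewrite mulIJ divff //.
  have -> : a * k + (-1) * a^-1 + (-1) * k * s%:R = 0.
    rewrite /k; field; rewrite subr_eq0; exact/andP.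
  by rewrite scale0r addr0.
rewrite (schur _ _ _ _ _ _ _ _ AAi) detIJ //.
rewrite (@mulPJ_IJ F t s (pid_mx t)) ?pidJ //.
rewrite (@mulPJ_PJ F t s (pid_mx t) (pid_mx t)) ?pidpid ?pidJ ?Jpid //.
have SE : forall om : F, (x + 3)%:M + (-3) *: J t t - (a^-1%:M + om *: J t t)
        = (x + 3 - a^-1)%:M + (-3 - om) *: J t t :> 'M[F]_t.
  by move=> om; apply/matrixP => i j; rewrite !mxE; case: (i == j) => /=; ring.
rewrite SE detIJ //; congr (_ * (_ * (1 + _ * _ / _))).
rewrite /k; ring.
Qed.

Lemma key_id (F : fieldType) (s1 t1 : nat) (y : F) :
  let s := (s1 + t1 + 2)%N in let t := (t1 + 1)%N in
  y + 1 != 0 -> y + 1 != s%:R -> y + 3 - (y + 1)^-1 != 0 ->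
  detval s t y = (y ^+ 2 + 4 * y + 2) ^+ t1 * (y + 1) ^+ s1 *
     (y ^+ 3 + (5 - s%:R - 3 * t%:R) * y ^+ 2 + (6 - 4 * s%:R - 2 * t%:R - s%:R * t%:R) * y
      + (2 - 2 * s%:R - s%:R * t%:R)).
Proof.
move=> s t a0 as0 al0; rewrite /detval.
set a := y + 1 in a0 as0 al0 *; set al := y + 3 - a^-1 in al0 *.
have qE : y ^+ 2 + 4 * y + 2 = al * a by rewrite /al /a; field.
rewrite qE exprMn /s /t !exprD !expr1.
move: as0; rewrite /s ?natrD => as0.
have as0' : a - (s1%:R + t1%:R + 2%:R) != 0 by rewrite subr_eq0.
rewrite ?natrD.
rewrite /al /a; field.
have e : (y + 3) * (y + 1) - 1 = al * a by rewrite /al /a; field.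
by rewrite e mulf_neq0 // a0 as0'.
Qed.

Definition cub {R : rcfType} (sR tR y : R) := y ^+ 3 + (5 - sR - 3 * tR) * y ^+ 2 +
   (6 - 4 * sR - 2 * tR - sR * tR) * y + (2 - 2 * sR - sR * tR).

Lemma cub_m1 (R : rcfType) (sR tR : R) : cub sR tR (-1) = sR - tR.
Proof. rewrite /cub; ring. Qed.

Lemma cub_th (R : rcfType) (sR tR r : R) : 3 <= sR -> 2 <= tR ->
  r ^+ 2 = 2 -> 0 <= r -> cub sR tR (r - 2) < 0.
Proof.
move=> s3 t2 r2 r0.
have e : cub sR tR (r - 2) = (r ^+ 2 - 2) * (r + (5 - sR - 3 * tR) - 6) +
                       tR * ((10 - sR) * r - 14 + sR).
  rewrite /cub; ring.
rewrite e r2 subrr mul0r add0r.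
have r1 : 1 < r by nra.
have r32 : r < 3/2 by nra.
have h1 : 3 * (r - 1) <= sR * (r - 1) by apply: ler_wpM2r; lra.
have h2 : (10 - sR) * r - 14 + sR < 0 by nra.
have h3 : 0 < tR by lra.
nra.
Qed.

Lemma cub_low (R : rcfType) (sR tR : R) : 3 <= sR -> 2 <= tR ->
  cub sR tR (- (sR * tR + 4 * sR + 2 * tR)) < 0.
Proof.
move=> s3 t2; set M := sR * tR + 4 * sR + 2 * tR.
have e : cub sR tR (- M) = - M ^+ 3 + (6 - sR - 3 * tR) * M ^+ 2 - 6 * M
                           + (2 - 2 * sR - sR * tR).
  rewrite /cub /M; ring.
have st0 : 0 < sR * tR by apply: mulr_gt0; lra.
have M0 : 0 < M by rewrite /M; lra.
have M3 : 0 < M ^+ 3 by apply: exprn_gt0.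
have M2 : 0 <= M ^+ 2 by apply: exprn_ge0; lra.
have h : (6 - sR - 3 * tR) * M ^+ 2 <= 0 by apply: mulr_le0_ge0 => //; lra.
rewrite e; lra.
Qed.

Lemma cub_high (R : rcfType) (sR tR : R) : 3 <= sR -> 2 <= tR ->
  0 < cub sR tR (sR * tR + 4 * sR + 3 * tR).
Proof.
move=> s3 t2; set K := sR * tR + 4 * sR + 3 * tR.
have e : cub sR tR K = K ^+ 2 * (sR * tR + 3 * sR + 4) + (6 + tR) * K
                       + (2 - 2 * sR - sR * tR).
  rewrite /cub /K; ring.
have st0 : 0 < sR * tR by apply: mulr_gt0; lra.
have K1 : 1 <= K by rewrite /K; lra.
have h1 : K <= K ^+ 2 by rewrite expr2 ler_peMr //; lra.
have h2 : K ^+ 2 <= K ^+ 2 * (sR * tR + 3 * sR + 4).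
  by rewrite ler_peMr; [lra | apply: exprn_ge0; lra | lra].
have h3 : 0 <= (6 + tR) * K by apply: mulr_ge0; lra.
have Kd : K = sR * tR + 4 * sR + 3 * tR by [].
rewrite e; lra.
Qed.

Lemma char_poly_horner (R : comNzRingType) n (A : 'M[R]_n) (x : R) :
  (char_poly A).[x] = \det (x%:M - A).
Proof.
rewrite /char_poly -horner_evalE -det_map_mx; congr (\det _).
apply/matrixP => i j; rewrite !mxE /horner_eval.
by rewrite rmorphB rmorphMn /= !horner_evalE hornerX hornerC.
Qed.

Lemma poly_eq_shift (R : numDomainType) (p q : {poly R}) (c : R) :
  (forall k : nat, p.[c + k%:R] = q.[c + k%:R]) -> p = q.
Proof.
move=> h; apply/eqP; rewrite -subr_eq0; apply/eqP.
apply: (@roots_geq_poly_eq0 _ _ [seq c + k%:R | k <- iota 0 (size (p - q))]).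
- apply/allP => y /mapP[k _ ->]; by rewrite /root hornerD hornerN h subrr.
- rewrite map_inj_uniq ?iota_uniq // => a b /addrI /eqP; rewrite eqr_nat => /eqP.
  done.
- by rewrite size_map size_iota.
Qed.

Definition p3 {R : rcfType} (c2 c1 c0 : R) : {poly R} :=
  'X^3 + (c2 *: 'X^2 + c1 *: 'X + c0%:P).

Lemma p3E (R : rcfType) (c2 c1 c0 y : R) : (p3 c2 c1 c0).[y] = y ^+ 3 + c2 * y ^+ 2 + c1 * y + c0.
Proof. rewrite /p3 !hornerE /=; ring. Qed.

Lemma p3_size_lead {R : rcfType} (c2 c1 c0 : R) :
  size (p3 c2 c1 c0) = 4%N /\ lead_coef (p3 c2 c1 c0) = 1.
Proof.
have hl : (size ((c2 *: 'X^2 + c1 *: 'X + c0%:P)%R : {poly R}) < size ('X^3 : {poly R}))%N.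
  rewrite size_polyXn ltnS.
  apply: (leq_trans (size_add _ _)); rewrite geq_max; apply/andP; split; last first.
    by apply: (leq_trans (size_polyC_leq1 _)).
  apply: (leq_trans (size_add _ _)); rewrite geq_max; apply/andP; split.
    by apply: (leq_trans (size_scale_leq _ _)); rewrite size_polyXn.
  by apply: (leq_trans (size_scale_leq _ _)); rewrite size_polyX.
split; first by rewrite /p3 size_addl // size_polyXn.
by rewrite /p3 lead_coefDl // lead_coefXn.
Qed.

Lemma p3_fact (R : rcfType) (c2 c1 c0 r1 r2 r3 : R) :
  root (p3 c2 c1 c0) r1 -> root (p3 c2 c1 c0) r2 -> root (p3 c2 c1 c0) r3 ->
  uniq [:: r1; r2; r3] ->
  p3 c2 c1 c0 = \prod_(z <- [:: r1; r2; r3]) ('X - z%:P).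
Proof.
move=> h1 h2 h3 u.
have ha : all (root (p3 c2 c1 c0)) [:: r1; r2; r3] by rewrite /= h1 h2 h3.
have hu : uniq_roots [:: r1; r2; r3] by rewrite uniq_rootsE.
have [q qE] := uniq_roots_prod_XsubC ha hu.
have [sz ld] := p3_size_lead c2 c1 c0.
have mon : \prod_(z <- [:: r1; r2; r3]) ('X - z%:P) \is monic by apply: monic_prod_XsubC.
have q0 : q != 0 by apply/eqP => q0; move: sz; rewrite qE q0 mul0r size_poly0.
have szq : size q = 1%N.
  move: sz; rewrite qE size_Mmonic // size_prod_XsubC /= addnS /= => /eqP; rewrite -[4%N]/(1 + 3)%N eqn_add2r => /eqP. done.
have lq : lead_coef q = 1.
  by have := congr1 lead_coef qE; rewrite ld lead_coef_Mmonic // => <-.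
apply: (etrans qE); rewrite (size1_polyC (eq_leq szq)).
have -> : q`_0 = 1 by rewrite -lq /lead_coef szq.
by rewrite mul1r.
Qed.

Lemma key_id' (F : fieldType) (s t s1 t1 : nat) (y : F) :
  s = (s1 + t1 + 2)%N -> t = (t1 + 1)%N ->
  y + 1 != 0 -> y + 1 != s%:R -> y + 3 - (y + 1)^-1 != 0 ->
  detval s t y = (y ^+ 2 + 4 * y + 2) ^+ t1 * (y + 1) ^+ s1 *
     (y ^+ 3 + (5 - s%:R - 3 * t%:R) * y ^+ 2 + (6 - 4 * s%:R - 2 * t%:R - s%:R * t%:R) * y
      + (2 - 2 * s%:R - s%:R * t%:R)).
Proof. by move=> -> ->; apply: key_id. Qed.

Theorem corollary3p2 (R : rcfType) (s t : nat) :
  (3 <= t + 1 <= s)%N ->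
  (exists r : seq R, eigen_seq (dist_mx_ord R (Kst_adj s t)) r) /\
  (forall r : seq R, eigen_seq (dist_mx_ord R (Kst_adj s t)) r ->
     r`_1 = Num.sqrt 2 - 2).
Proof.
move=> h.
have [s1 [t2 [Es Et]]] : exists s1 t2, s = (s1 + (t2 + 1) + 2)%N /\ t = (t2 + 1 + 1)%N.
  by exists (s - t - 1)%N, (t - 2)%N; lia.
have hts : (2 <= t <= s)%N by lia.
have r2 : Num.sqrt (2 : R) ^+ 2 = 2 by rewrite sqr_sqrtr // ler0n.
have r0 : 0 <= Num.sqrt (2 : R) := sqrtr_ge0 _.
move: r2 r0; set r := Num.sqrt (2 : R) => r2 r0.
have r1 : 1 < r by nra.
have rlt : r < 2 by nra.
have s3 : 3 <= s%:R :> R by rewrite (ler_nat R 3 s); lia.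
have t2' : 2 <= t%:R :> R by rewrite (ler_nat R 2 t); lia.
have stt : t%:R + 1 <= s%:R :> R by rewrite natr1 ler_nat; lia.
pose P := p3 (5 - s%:R - 3 * t%:R) (6 - 4 * s%:R - 2 * t%:R - s%:R * t%:R)
             (2 - 2 * s%:R - s%:R * t%:R : R).
have PE y : P.[y] = cub s%:R t%:R y by rewrite p3E /cub.
pose th := r - 2; pose th' := - r - 2.
pose M := s%:R * t%:R + 4 * s%:R + 2 * t%:R : R.
pose K := s%:R * t%:R + 4 * s%:R + 3 * t%:R : R.
have Pm1 : P.[-1] = s%:R - t%:R by rewrite PE cub_m1.
have Pth : P.[th] < 0 by rewrite PE; apply: cub_th.
have PM : P.[- M] < 0 by rewrite PE; apply: cub_low.
have PK : 0 < P.[K] by rewrite PE; apply: cub_high.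
have stpos : 0 < s%:R * t%:R :> R by apply: mulr_gt0; lra.
have [r3 /andP[r3a r3b] r3r] : exists2 x, - M <= x <= -1 & root P x.
  apply: poly_ivt; first by rewrite /M; lra.
  by rewrite Pm1; apply/andP; split; lra.
have [r2' /andP[r2a r2b] r2r] : exists2 x, -1 <= x <= th & root P x.
  have [x hx rx] := @poly_ivt R (- P) (-1) th ltac:(rewrite /th; lra)
    ltac:(by rewrite !hornerN Pm1; apply/andP; split; lra).
  by exists x => //; move: rx; rewrite /root hornerN oppr_eq0.
have [r1' /andP[r1a r1b] r1r] : exists2 x, th <= x <= K & root P x.
  apply: poly_ivt; first by rewrite /K /th; lra.
  by apply/andP; split; lra.
have r3lt : r3 < -1.
  rewrite lt_neqAle r3b andbT; apply: contraTneq r3r => ->.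
  rewrite /root Pm1 subr_eq0 gt_eqF //; lra.
have r2gt : -1 < r2'.
  rewrite lt_neqAle r2a andbT; apply: contraTneq r2r => <-.
  rewrite /root Pm1 subr_eq0 gt_eqF //; lra.
have r2lt : r2' < th.
  rewrite lt_neqAle r2b andbT; apply: contraTneq r2r => ->.
  by rewrite /root lt_eqF.
have r1gt : th < r1'.
  rewrite lt_neqAle r1a andbT; apply: contraTneq r1r => <-.
  by rewrite /root lt_eqF.
have Pf : P = \prod_(z <- [:: r1'; r2'; r3]) ('X - z%:P).
  apply: p3_fact => //=; rewrite !inE negb_or.
  have o1 : r2' < r1' by lra.
  have o2 : r3 < r1' by lra.
  have o3 : r3 < r2' by lra.
  by rewrite (gt_eqF o1) (gt_eqF o2) (gt_eqF o3).
have cubE y : cub s%:R t%:R y = (y - r1') * (y - r2') * (y - r3).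
  by rewrite -PE Pf horner_prod !big_cons big_nil !hornerXsubC mulr1 !mulrA.
pose rest := nseq t2 th ++ nseq (t2 + 1) th' ++ nseq s1 (-1) ++ [:: r2'; r3].
pose L := r1' :: th :: sort >=%R rest.
have charE : char_poly (dist_mx_ord R (Kst_adj s t)) = \prod_(x <- L) ('X - x%:P).
  apply: (@poly_eq_shift _ _ _ (s%:R + 1)) => k.
  have k0 : 0 <= k%:R :> R := ler0n _ _.
  set y := s%:R + 1 + k%:R.
  have y1 : y + 1 != 0 by rewrite gt_eqF // /y; lra.
  have y2 : y + 1 != s%:R by rewrite gt_eqF // /y; lra.
  have y3 : y + 3 - (y + 1)^-1 != 0.
    have yp : 0 < y + 1 by rewrite /y; lra.
    have z1 : (y + 1) * (y + 1)^-1 = 1 by rewrite mulfV.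
    have zp : 0 < (y + 1)^-1 by rewrite invr_gt0.
    have yge : 1 <= y + 1 by rewrite /y; lra.
    rewrite gt_eqF // subr_gt0; nra.
  rewrite char_poly_horner det_main // (key_id' _ _ _ _ _ _ Es Et) //.
  have -> : y ^+ 3 + (5 - s%:R - 3 * t%:R) * y ^+ 2 +
    (6 - 4 * s%:R - 2 * t%:R - s%:R * t%:R) * y + (2 - 2 * s%:R - s%:R * t%:R)
    = cub s%:R t%:R y by [].
  have q2 : y ^+ 2 + 4 * y + 2 = (y - th) * (y - th').
    rewrite /th /th'.
    have -> : (y - (r - 2)) * (y - (- r - 2)) = y ^+ 2 + 4 * y + 4 - r ^+ 2 by ring.
    rewrite r2; ring.
  rewrite cubE q2 horner_prod (eq_bigr (fun x => y - x)); last first.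
    by move=> x _; rewrite hornerXsubC.
  rewrite !big_cons (perm_big _ (permEl (perm_sort _ _))) !big_cat /= !big_nseq !iter_mulr_1.
  rewrite !big_cons big_nil exprMn addn1 !exprS.
  have gen : forall A B C D E F G H : R,
    A * B * (C * D) * E * (F * G * H) = F * (A * (B * (C * D * (E * (G * (H * 1)))))).
    by move=> *; ring.
  by rewrite opprK; apply: gen.
have gtr : transitive (>=%R : rel R) by move=> a b c h1 h2; exact: le_trans h2 h1.
have gto : total (>=%R : rel R) by move=> a b; exact: le_total.
have gas : antisymmetric (>=%R : rel R).
  by move=> a b /andP[h1 h2]; apply/eqP; rewrite eq_le; apply/andP; split.
have sL : sorted >=%R L.
  rewrite /L /= r1a /= (path_sortedE gtr) sort_sorted // andbT.
  rewrite (perm_all _ (permEl (perm_sort _ _))) /rest !all_cat !all_nseq /=.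
  have h1 : th <= th by [].
  have h2 : th' <= th by rewrite /th /th'; lra.
  have h3 : -1 <= th by rewrite /th; lra.
  by rewrite h1 h2 h3 r2b /= !orbT (le_trans r3b h3).
split.
  by exists L; split.
move=> l [sl cl].
have pe : perm_eq l L by apply: prod_XsubC_eq; rewrite -cl charE.
by rewrite (sorted_eq gtr gas sl sL pe).
Qed.
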